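(* For all integers $0\le t\le n$, there exists a $2$-CNF formula $F$ on $n$ variables that is acyclic, $t$-admissible, and satisfies $|\mathrm{sat}_t(F)|=S(n,t,2)$.
   Context: A $2$-CNF formula over $x_1,\dots,x_n$ is a conjunction of clauses each containing at most two literals. The implication graph $G(F)$ of a $2$-CNF $F$ is the directed graph on the $2n$ literals $x_1,\dots,x_n,\neg x_1,\dots,\neg x_n$ which, for each clause $X\lor Y$ ($X,Y$ literals), contains the edges $\neg X\to Y$ and $\neg Y\to X$ (a unit clause $X$ is treated as $X\lor X$). $F$ is acyclic if $G(F)$ has no directed cycle. $\mathrm{sat}_t(F)$ is the set of satisfying assignments of Hamming weight exactly $t$; $F$ is $t$-admissible if it has no satisfying assignment of Hamming weight less than $t$; $S(n,t,k)$ is the maximum of $|\mathrm{sat}_t(F)|$ over $t$-admissible $k$-CNF formulas $F$ on $n$ variables. *)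

(* Defs.v *)
From mathcomp Require Import all_boot.
Set Implicit Arguments. Unset Strict Implicit. Unset Printing Implicit Defensive.

(* A literal over variables x_1..x_n (indexed by 'I_n): (i, true) is x_i,
   (i, false) is the negation of x_i. *)
Definition lit (n : nat) : finType := ('I_n * bool)%type.
Definition negl n (l : lit n) : lit n := (l.1, ~~ l.2).

Definition clause (n : nat) := {set lit n}.
Definition cnf (n : nat) := {set clause n}.

Definition is_kcnf n (k : nat) (F : cnf n) : bool := [forall c in F, #|c| <= k].

Definition assignment (n : nat) := {ffun 'I_n -> bool}.
Definition weight n (a : assignment n) : nat := #|[set i | a i]|.

Definition sat_lit n (a : assignment n) (l : lit n) : bool := a l.1 == l.2.
Definition sat_clause n (a : assignment n) (c : clause n) : bool :=
  [exists l in c, sat_lit a l].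
Definition sat_cnf n (a : assignment n) (F : cnf n) : bool :=
  [forall c in F, sat_clause a c].

Definition sat_t n (t : nat) (F : cnf n) : {set assignment n} :=
  [set a | sat_cnf a F & weight a == t].

Definition admissible n (t : nat) (F : cnf n) : bool :=
  [forall a : assignment n, sat_cnf a F ==> (t <= weight a)].

Definition S (n t k : nat) : nat :=
  \max_(F : cnf n | is_kcnf k F && admissible t F) #|sat_t t F|.

(* Implication graph of a 2-CNF: clause {X, Y} (X <> Y) gives edges
   ~X -> Y and ~Y -> X; a unit clause {X} (= X \/ X) gives the edge ~X -> X. *)
Definition impl_edge n (F : cnf n) : rel (lit n) :=
  fun u v => [exists c in F,
    [&& negl u \in c, v \in c & (negl u != v) || (#|c| == 1)]].

Definition acyclic n (F : cnf n) : bool :=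
  [forall u : lit n, forall v : lit n,
     ~~ (impl_edge F u v && connect (impl_edge F) v u)].

(* Main.v *)
Require Import Defs.
From mathcomp Require Import all_boot.

Set Implicit Arguments. Unset Strict Implicit. Unset Printing Implicit Defensive.

Definition maj n (b1 b2 b3 : assignment n) : assignment n :=
  [ffun i => (b1 i && b2 i) || (b1 i && b3 i) || (b2 i && b3 i)].

Lemma pig3 (T : finType) (c : {set T}) (x y z : T) :
  #|c| <= 2 -> x \in c -> y \in c -> z \in c -> [|| x == y, x == z | y == z].
Proof.
move=> hc hx hy hz.
case: (eqVneq x y) => //= hxy.
have e : [set x; y] == c.
  rewrite eqEcard cards2 hxy /= hc andbT.
  by apply/subsetP=> w; rewrite !inE => /orP [] /eqP ->.
move: hz; rewrite -(eqP e) !inE => /orP [] /eqP ->.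
  by rewrite eqxx.
by rewrite eqxx orbT.
Qed.

Lemma maj_clause n (c : clause n) (b1 b2 b3 : assignment n) :
  #|c| <= 2 -> sat_clause b1 c -> sat_clause b2 c -> sat_clause b3 c ->
  sat_clause (maj b1 b2 b3) c.
Proof.
move=> hc /existsP [l1 /andP [h1 s1]] /existsP [l2 /andP [h2 s2]]
  /existsP [l3 /andP [h3 s3]].
move: s1 s2 s3; rewrite /sat_lit => /eqP s1 /eqP s2 /eqP s3.
have := pig3 hc h1 h2 h3 => /or3P [] /eqP e; subst.
- apply/existsP; exists l2; rewrite h2 /sat_lit ffunE s1 s2.
  by case: (l2.2); case: (b3 l2.1).
- apply/existsP; exists l3; rewrite h3 /sat_lit ffunE s1 s3.
  by case: (l3.2); case: (b2 l3.1).
- apply/existsP; exists l3; rewrite h3 /sat_lit ffunE s2 s3.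
  by case: (l3.2); case: (b1 l3.1).
Qed.

Lemma maj_cnf n (F : cnf n) (b1 b2 b3 : assignment n) : is_kcnf 2 F ->
  sat_cnf b1 F -> sat_cnf b2 F -> sat_cnf b3 F -> sat_cnf (maj b1 b2 b3) F.
Proof.
move=> /forallP hk /forallP h1 /forallP h2 /forallP h3; apply/forallP => c.
apply/implyP => hc; apply: maj_clause.
- exact: (implyP (hk c) hc).
- exact: (implyP (h1 c) hc).
- exact: (implyP (h2 c) hc).
- exact: (implyP (h3 c) hc).
Qed.

Lemma helly n (F : cnf n) (HF : is_kcnf 2 F) (Z : {set 'I_n})
  (Hpair : forall j k, j \in Z -> k \in Z ->
     exists b, [&& sat_cnf b F, ~~ b j & ~~ b k]) (s : seq 'I_n) :
  all (mem Z) s -> forall j k, j \in Z -> k \in Z ->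
  exists b, [&& sat_cnf b F, ~~ b j, ~~ b k & all (fun i => ~~ b i) s].
Proof.
elim: s => [|x s IH] /=.
  move=> _ j k hj hk; have [b /and3P [h1 h2 h3]] := Hpair j k hj hk.
  by exists b; rewrite h1 h2 h3.
move=> /andP [hx hs] j k hj hk.
have [b1 /and4P [f1 j1 k1 a1]] := IH hs j k hj hk.
have [b2 /and4P [f2 x2 k2 a2]] := IH hs x k hx hk.
have [b3 /and4P [f3 j3 x3 a3]] := IH hs j x hj hx.
exists (maj b1 b2 b3).
rewrite maj_cnf // !ffunE.
move: j1 k1 x2 k2 j3 x3 => /negbTE -> /negbTE -> /negbTE -> /negbTE -> /negbTE -> /negbTE ->.
rewrite /= ?andbF /=.
apply/allP => i hi; rewrite ffunE.
move/allP: a1 => /(_ i hi) /negbTE ->.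
by move/allP: a2 => /(_ i hi) /negbTE ->.
Qed.
Definition posM n (F : cnf n) : cnf n :=
  [set c : clause n | [&& [forall l in c, l.2], #|c| <= 2 &
     [forall b : assignment n, sat_cnf b F ==> sat_clause b c]]].

Lemma posM_witness n (F : cnf n) (a : assignment n) (c : clause n) :
  [forall l in c, l.2] -> #|c| <= 2 -> sat_cnf a (posM F) -> ~~ sat_clause a c ->
  exists b, sat_cnf b F && ~~ sat_clause b c.
Proof.
move=> hp hc /forallP /(_ c) ha hna.
have : c \notin posM F.
  by apply/negP => hin; move: (implyP ha hin); rewrite (negbTE hna).
rewrite inE hp hc /= => /forallPn [b]; rewrite negb_imply => h.
by exists b.
Qed.

Lemma posM_down n (F : cnf n) (a : assignment n) : is_kcnf 2 F ->
  sat_cnf a (posM F) -> exists b, sat_cnf b F && (weight b <= weight a).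
Proof.
move=> HF ha.
pose Z := [set i | ~~ a i].
have Hpair : forall j k, j \in Z -> k \in Z ->
     exists b, [&& sat_cnf b F, ~~ b j & ~~ b k].
  move=> j k; rewrite !inE => hj hk.
  have hp1 : [forall l in [set (j, true); (k, true)], l.2].
    by apply/forallP => l; apply/implyP; rewrite !inE => /orP [] /eqP ->.
  have hc1 : #|[set (j, true); (k, true)]| <= 2.
    by rewrite cards2; case: (_ != _).
  have hn1 : ~~ sat_clause a [set (j, true); (k, true)].
    apply/existsPn => l; rewrite !inE /sat_lit; apply/negP.
    by case/andP => /orP [] /eqP -> /=; [rewrite (negbTE hj) | rewrite (negbTE hk)].
  have [b /andP [hb hnb]] := posM_witness hp1 hc1 ha hn1.
  exists b; rewrite hb /=.
  move/existsPn: hnb => hnb.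
  have := hnb (j, true); have := hnb (k, true).
  by rewrite !inE !eqxx /= orbT /sat_lit /= !eqb_id => -> ->.
case: (pickP (mem Z)) => [j hj | hZ].
  have hallZ : all (mem Z) (enum Z) by apply/allP => x; rewrite mem_enum.
  have [b /and4P [hb _ _ hall]] := helly HF Hpair hallZ hj hj.
  exists b; rewrite hb /=; apply: subset_leq_card; apply/subsetP => i.
  rewrite !inE => hbi; apply/negPn/negP => hai.
  have : i \in enum Z by rewrite mem_enum inE.
  by move/allP: hall => H /H; rewrite hbi.
have hp0 : [forall l in (set0 : clause n), l.2].
  by apply/forallP => l; rewrite inE.
have hc0 : #|(set0 : clause n)| <= 2 by rewrite cards0.
have hn0 : ~~ sat_clause a set0 by apply/existsPn => l; rewrite inE.
have [b /andP [hb _]] := posM_witness hp0 hc0 ha hn0.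
exists b; rewrite hb /=; apply: subset_leq_card; apply/subsetP => i.
rewrite !inE => _; apply/negPn/negP => hai.
by have := hZ i; rewrite /= inE hai.
Qed.

Theorem mainTheorem9 (n t : nat) (htn : t <= n) :
  exists F : cnf n,
    [/\ is_kcnf 2 F, acyclic F, admissible t F & #|sat_t t F| = S n t 2].
Proof.
pose A := [pred F : cnf n | is_kcnf 2 F && admissible t F].
have ES : S n t 2 = \max_(F in A) #|sat_t t F|.
  by apply: eq_bigl => F; rewrite inE.
have w : [set (set0 : clause n)] \in A.
  rewrite inE; apply/andP; split.
    by apply/forallP => c; apply/implyP; rewrite inE => /eqP ->; rewrite cards0.
  apply/forallP => a; apply/implyP => /forallP /(_ set0) /implyP.
  by rewrite inE eqxx => /(_ isT) /existsP [l]; rewrite inE.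
have hA : 0 < #|A| by apply/card_gt0P; exists [set (set0 : clause n)].
have [F0 hF0 hmax] := @eq_bigmax_cond _ A (fun F => #|sat_t t F|) hA.
move: (hF0); rewrite inE => /andP [hk0 had0].
have hk : is_kcnf 2 (posM F0).
  by apply/forallP => c; apply/implyP; rewrite inE => /and3P [].
have had : admissible t (posM F0).
  apply/forallP => a; apply/implyP => ha.
  have [b /andP [hb hw]] := posM_down hk0 ha.
  apply: leq_trans hw.
  exact: (implyP (forallP had0 b) hb).
have hsub : sat_t t F0 \subset sat_t t (posM F0).
  apply/subsetP => a; rewrite !inE => /andP [ha ->]; rewrite andbT.
  apply/forallP => c; apply/implyP; rewrite inE => /and3P [_ _ /forallP /(_ a)].
  by move/implyP; apply.
exists (posM F0); split => //.
- apply/forallP => u; apply/forallP => v; apply/negP => /andP [euv].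
  have pos : forall x y, impl_edge (posM F0) x y -> (x.2 == false) && y.2.
    move=> x y /existsP [c /and4P [hc hx hy _]].
    move: hc; rewrite inE => /and3P [/forallP hp _ _].
    move: (implyP (hp _) hx) (implyP (hp _) hy) => /= hx2 ->.
    by rewrite andbT; move: hx2; case: (x.2).
  move: (pos _ _ euv) => /andP [/eqP hu hv].
  case/connectP => [[|w0 p]] /=.
    by move=> _ e; move: hv; rewrite -e hu.
  case/andP => /pos /andP [/eqP hv' _] _ _.
  by move: hv; rewrite hv'.
- apply/eqP; rewrite eqn_leq; apply/andP; split.
    rewrite ES; apply: leq_bigmax_cond; by rewrite inE hk had.
  by rewrite ES hmax; apply: subset_leq_card.
Qed.
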